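(* Suppose $\beta\ge\bar\beta$. Then for every $X\in\overline\Omega_{1/6}$, $$\|\nabla h(X)\|_F\ge\frac12\big\|\mathrm{grad} f(\mathcal{P}_{\mathcal{S}_{n,p}}(X))\big\|_F+\frac\beta4\|X^\top X-I_p\|_F .$$
   Context: $f:\mathbb{R}^{n\times p}\to\mathbb{R}$ ($n\ge p$) is differentiable with $f,\nabla f$ locally Lipschitz. $\Phi(M):=\frac12(M+M^\top)$. For $Y\in\mathcal{S}_{n,p}=\{Y:Y^\top Y=I_p\}$, $\mathrm{grad} f(Y):=\nabla f(Y)-Y\Phi(Y^\top\nabla f(Y))$. $\mathcal{A}(X):=\frac32I_p-\frac12X^\top X$, $g(X):=f(X\mathcal{A}(X))$, $h(X):=g(X)+\frac\beta4\|X^\top X-I_p\|_F^2$, $G(X):=\nabla f(Y)|_{Y=X\mathcal{A}(X)}$. $\overline\Omega_r:=\{X:\|X^\top X-I_p\|_F\le r\}$; $\Omega:=\{X:\|X\|_2\le1+\frac1{12}\}$; $M_1:=\sup_{X\in\Omega}\|G(X)\|_F$; $M_2:=\sup_{X\ne Y\in\Omega}\frac{\|\nabla g(X)-\nabla g(Y)\|_F}{\|X-Y\|_F}$; $\bar\beta:=\max\{12M_1,6M_2\}$. For full-column-rank $X$ with economic SVD $X=U\Sigma V^\top$, $\mathcal{P}_{\mathcal{S}_{n,p}}(X):=UV^\top$. *)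

(* Defs.v *)
From HB Require Import structures.
From mathcomp Require Import all_boot all_order all_algebra.
From mathcomp Require Import boolp classical_sets reals ereal.
Set Implicit Arguments. Unset Strict Implicit. Unset Printing Implicit Defensive.
Import Order.TTheory GRing.Theory Num.Theory.
Local Open Scope ring_scope.
Local Open Scope classical_set_scope.

Section Defs.
Variable R : realType.

Definition frob_inner m k (A B : 'M[R]_(m, k)) : R :=
  \sum_(i < m) \sum_(j < k) A i j * B i j.
Definition normF m k (A : 'M[R]_(m, k)) : R := Num.sqrt (frob_inner A A).

Definition vnorm k (v : 'cV[R]_k) : R := normF v.

Definition spec_norm m k (X : 'M[R]_(m, k)) : \bar R :=
  ereal_sup [set (vnorm (X *m v))%:E | v in [set v : 'cV[R]_k | vnorm v = 1]].

Definition is_gradient m k (F : 'M[R]_(m, k) -> R) (G : 'M[R]_(m, k) -> 'M[R]_(m, k)) :=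
  forall X, forall eps : R, 0 < eps -> exists2 delta : R, 0 < delta &
    forall H, normF H < delta ->
      `| F (X + H) - F X - frob_inner (G X) H | <= eps * normF H.

Definition loc_lipschitz m k (F : 'M[R]_(m, k) -> R) :=
  forall X, exists2 r : R, 0 < r & exists L : R, forall Y Z,
    normF (Y - X) < r -> normF (Z - X) < r -> `| F Y - F Z | <= L * normF (Y - Z).
Definition loc_lipschitz_mx m k (F : 'M[R]_(m, k) -> 'M[R]_(m, k)) :=
  forall X, exists2 r : R, 0 < r & exists L : R, forall Y Z,
    normF (Y - X) < r -> normF (Z - X) < r -> normF (F Y - F Z) <= L * normF (Y - Z).

Definition symm_part k (M : 'M[R]_k) : 'M[R]_k := 2^-1 *: (M + M^T).

(* Riemannian gradient on the Stiefel manifold, given the Euclidean gradient gf *)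
Definition rgrad n p (gf : 'M[R]_(n, p) -> 'M[R]_(n, p)) (Y : 'M[R]_(n, p)) :=
  gf Y - Y *m symm_part (Y^T *m gf Y).

Definition Amap n p (X : 'M[R]_(n, p)) : 'M[R]_p := (3/2) *: 1%:M - 2^-1 *: (X^T *m X).

Definition gfun n p (f : 'M[R]_(n, p) -> R) (X : 'M[R]_(n, p)) : R := f (X *m Amap X).

Definition hfun n p (f : 'M[R]_(n, p) -> R) (beta : R) (X : 'M[R]_(n, p)) : R :=
  gfun f X + beta / 4 * normF (X^T *m X - 1%:M) ^+ 2.

Definition Gmap n p (gf : 'M[R]_(n, p) -> 'M[R]_(n, p)) (X : 'M[R]_(n, p)) := gf (X *m Amap X).

Definition OmegaBar n p (r : R) : set 'M[R]_(n, p) := [set X | normF (X^T *m X - 1%:M) <= r].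
Definition Omega n p : set 'M[R]_(n, p) := [set X | (spec_norm X <= (1 + 1/12)%:E)%E].

Definition M1 n p (gf : 'M[R]_(n, p) -> 'M[R]_(n, p)) : \bar R :=
  ereal_sup [set (normF (Gmap gf X))%:E | X in @Omega n p].

Definition M2 n p (gg : 'M[R]_(n, p) -> 'M[R]_(n, p)) : \bar R :=
  ereal_sup [set e | exists X Y, [/\ @Omega n p X, @Omega n p Y, X <> Y &
     e = (normF (gg X - gg Y) / normF (X - Y))%:E]].

Definition betabar n p gf gg : \bar R :=
  Order.max (12%:E * @M1 n p gf)%E (6%:E * @M2 n p gg)%E.

Definition is_econ_svd n p (X U : 'M[R]_(n, p)) (s : 'rV[R]_p) (V : 'M[R]_p) :=
  [/\ U^T *m U = 1%:M, V^T *m V = 1%:M, V *m V^T = 1%:M,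
      forall i, 0 < s 0 i & X = U *m diag_mx s *m V^T].

End Defs.

Arguments OmegaBar {R} n p r.
Arguments Omega {R} n p.
Arguments M1 {R} n p gf.
Arguments M2 {R} n p gg.
Arguments betabar {R} n p gf gg.

(* Main.v *)
Require Import Defs.
From HB Require Import structures.
From mathcomp Require Import all_boot all_order all_algebra.
From mathcomp Require Import boolp classical_sets reals ereal.
From mathcomp Require Import ring lra.
Import Order.TTheory GRing.Theory Num.Theory.
Local Open Scope ring_scope.

Set Implicit Arguments. Unset Strict Implicit. Unset Printing Implicit Defensive.

Section Basic.
Variable R : realType.
Lemma mul_self_ge0 (x : R) : 0 <= x * x. Proof. by rewrite -expr2 sqr_ge0. Qed.
Lemma mul_self_eq0 (x : R) : (x * x == 0) = (x == 0). Proof. by rewrite -expr2 sqrf_eq0. Qed.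

Lemma frobE m k (A B : 'M[R]_(m, k)) : frob_inner A B = \tr (A^T *m B).
Proof.
rewrite /frob_inner /mxtrace exchange_big /=; apply: eq_bigr => i _.
by rewrite !mxE; apply: eq_bigr => j _; rewrite mxE.
Qed.

Lemma frobC m k (A B : 'M[R]_(m, k)) : frob_inner A B = frob_inner B A.
Proof. by apply: eq_bigr => i _; apply: eq_bigr => j _; rewrite mulrC. Qed.

Lemma frobDl m k (A B C : 'M[R]_(m, k)) : frob_inner (A + B) C = frob_inner A C + frob_inner B C.
Proof. by rewrite !frobE linearD /= mulmxDl mxtraceD. Qed.

Lemma frobZl m k a (A C : 'M[R]_(m, k)) : frob_inner (a *: A) C = a * frob_inner A C.
Proof. by rewrite !frobE linearZ /= -scalemxAl mxtraceZ. Qed.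

Lemma frobNl m k (A C : 'M[R]_(m, k)) : frob_inner (- A) C = - frob_inner A C.
Proof. by rewrite -scaleN1r frobZl mulN1r. Qed.

Lemma frobBl m k (A B C : 'M[R]_(m, k)) : frob_inner (A - B) C = frob_inner A C - frob_inner B C.
Proof. by rewrite frobDl frobNl. Qed.

Lemma frobDr m k (A B C : 'M[R]_(m, k)) : frob_inner C (A + B) = frob_inner C A + frob_inner C B.
Proof. by rewrite frobC frobDl !(frobC C). Qed.
Lemma frobZr m k a (A C : 'M[R]_(m, k)) : frob_inner C (a *: A) = a * frob_inner C A.
Proof. by rewrite frobC frobZl frobC. Qed.
Lemma frobNr m k (A C : 'M[R]_(m, k)) : frob_inner C (- A) = - frob_inner C A.
Proof. by rewrite frobC frobNl frobC. Qed.
Lemma frobBr m k (A B C : 'M[R]_(m, k)) : frob_inner C (A - B) = frob_inner C A - frob_inner C B.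
Proof. by rewrite frobDr frobNr. Qed.
Lemma frob0r m k (C : 'M[R]_(m, k)) : frob_inner C 0 = 0.
Proof. by rewrite /frob_inner big1 // => i _; rewrite big1 // => j _; rewrite mxE mulr0. Qed.

Lemma frob_ge0 m k (A : 'M[R]_(m, k)) : 0 <= frob_inner A A.
Proof. by apply: sumr_ge0 => i _; apply: sumr_ge0 => j _; exact: mul_self_ge0. Qed.

Lemma frob_eq0 m k (A : 'M[R]_(m, k)) : frob_inner A A = 0 -> A = 0.
Proof.
move=> /eqP; rewrite psumr_eq0 => [/allP H|i _]; last first.
  by apply: sumr_ge0 => j _; exact: mul_self_ge0.
apply/matrixP => i j; have := H i (mem_index_enum _); rewrite psumr_eq0.
  move=> /allP /(_ j (mem_index_enum _)) /=; rewrite mul_self_eq0 mxE => /eqP //.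
by move=> l _; exact: mul_self_ge0.
Qed.

Lemma normF_ge0 m k (A : 'M[R]_(m, k)) : 0 <= normF A.
Proof. exact: sqrtr_ge0. Qed.

Lemma normF_sq m k (A : 'M[R]_(m, k)) : normF A ^+ 2 = frob_inner A A.
Proof. by rewrite sqr_sqrtr // frob_ge0. Qed.

Lemma normF_eq0 m k (A : 'M[R]_(m, k)) : normF A = 0 -> A = 0.
Proof. by move=> h; apply: frob_eq0; rewrite -normF_sq h expr0n. Qed.

Lemma normF0 m k : normF (0 : 'M[R]_(m, k)) = 0.
Proof. by rewrite /normF frob0r sqrtr0. Qed.

Lemma normFZ m k a (A : 'M[R]_(m, k)) : normF (a *: A) = `|a| * normF A.
Proof. by rewrite /normF frobZl frobZr mulrA -expr2 sqrtrM ?sqrtr_sqr // sqr_ge0. Qed.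

Lemma normFN m k (A : 'M[R]_(m, k)) : normF (- A) = normF A.
Proof. by rewrite -scaleN1r normFZ normrN1 mul1r. Qed.

Lemma frob_CS m k (A B : 'M[R]_(m, k)) : frob_inner A B ^+ 2 <= frob_inner A A * frob_inner B B.
Proof.
have [B0|Bn0] := eqVneq (frob_inner B B) 0.
  by rewrite (frob_eq0 B0) !frob0r expr0n mulr0.
have Bp : 0 < frob_inner B B by rewrite lt_def Bn0 frob_ge0.
set t := frob_inner A B / frob_inner B B.
have := frob_ge0 (A - t *: B).
rewrite frobBl !frobBr !frobZl !frobZr (frobC B A).
rewrite /t => h.
have e : frob_inner A B / frob_inner B B * (frob_inner A B / frob_inner B B * frob_inner B B) = frob_inner A B ^+ 2 / frob_inner B B.
  by field; rewrite Bn0.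
rewrite e in h.
have e2 : frob_inner A B / frob_inner B B * frob_inner A B = frob_inner A B ^+ 2 / frob_inner B B.
  by field; rewrite Bn0.
rewrite e2 in h.
have h3 : frob_inner A B ^+ 2 / frob_inner B B <= frob_inner A A by lra.
by rewrite -ler_pdivrMr.
Qed.

Lemma le_sq (x y : R) : 0 <= y -> x ^+ 2 <= y ^+ 2 -> x <= y.
Proof. move=> hy h; rewrite leNgt; apply/negP => hxy; nra. Qed.

Lemma frob_le m k (A B : 'M[R]_(m, k)) : frob_inner A B <= normF A * normF B.
Proof.
apply: le_sq; first by rewrite mulr_ge0 // normF_ge0.
by rewrite exprMn !normF_sq frob_CS.
Qed.

Lemma normFD m k (A B : 'M[R]_(m, k)) : normF (A + B) <= normF A + normF B.
Proof.
apply: le_sq; first by rewrite addr_ge0 // normF_ge0.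
rewrite normF_sq frobDl !frobDr sqrrD !normF_sq (frobC B A).
have := frob_le A B; lra.
Qed.

End Basic.


Section Mx.
Variable R : realType.

Lemma normF_lorth n p k (Q : 'M[R]_(n, p)) (A : 'M[R]_(p, k)) :
  Q^T *m Q = 1%:M -> normF (Q *m A) = normF A.
Proof.
move=> hQ; rewrite /normF !frobE trmx_mul -mulmxA (mulmxA Q^T) hQ mul1mx //.
Qed.

Lemma normF_rorth p k (V : 'M[R]_p) (A : 'M[R]_(k, p)) :
  V^T *m V = 1%:M -> normF (A *m V^T) = normF A.
Proof.
move=> hV; rewrite /normF !frobE trmx_mul trmxK -mulmxA mxtrace_mulC.
by rewrite -!mulmxA hV mulmx1.
Qed.

Lemma frob_diag p (w : 'rV[R]_p) : frob_inner (diag_mx w) (diag_mx w) = \sum_i w 0 i ^+ 2.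
Proof.
apply: eq_bigr => i _; rewrite (bigD1 i) //= big1 ?addr0.
  by rewrite !mxE eqxx !mulr1n expr2.
by move=> j /negbTE hj; rewrite !mxE eq_sym hj mulr0n mulr0.
Qed.

Lemma normF_svd n p (U : 'M[R]_(n, p)) (V : 'M[R]_p) (w : 'rV[R]_p) :
  U^T *m U = 1%:M -> V^T *m V = 1%:M ->
  normF (U *m diag_mx w *m V^T) ^+ 2 = \sum_i w 0 i ^+ 2.
Proof.
by move=> hU hV; rewrite normF_rorth // normF_lorth // normF_sq frob_diag.
Qed.

Lemma diag_one p : (1%:M : 'M[R]_p) = diag_mx (\row_j 1).
Proof. by rewrite -diag_const_mx; congr diag_mx; apply/matrixP => i j; rewrite !mxE. Qed.

Lemma diagB p (a b : 'rV[R]_p) : diag_mx a - diag_mx b = diag_mx (a - b).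
Proof. by rewrite linearB. Qed.

Section SVD.
Variables (n p : nat) (X U : 'M[R]_(n, p)) (s : 'rV[R]_p) (V : 'M[R]_p).
Hypothesis hsvd : is_econ_svd X U s V.

Let hU : U^T *m U = 1%:M. Proof. by case: hsvd. Qed.
Let hV : V^T *m V = 1%:M. Proof. by case: hsvd. Qed.
Let hV' : V *m V^T = 1%:M. Proof. by case: hsvd. Qed.
Let hX : X = U *m diag_mx s *m V^T. Proof. by case: hsvd. Qed.
Lemma svd_pos i : 0 < s 0 i. Proof. by case: hsvd. Qed.

Definition dvec : 'rV[R]_p := \row_j (s 0 j ^+ 2 - 1).

Lemma svd_D : X^T *m X - 1%:M = V *m diag_mx dvec *m V^T.
Proof.
rewrite hX !trmx_mul trmxK tr_diag_mx.
rewrite -!mulmxA (mulmxA U^T) hU mul1mx (mulmxA (diag_mx s)) mulmx_diag.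
rewrite -{1}hV' -mulmxBr -{2}(mul1mx V^T) -mulmxBl diag_one diagB mulmxA.
rewrite [RHS]mulmxA; congr (_ *m diag_mx _ *m _); apply/matrixP => i j; rewrite !mxE expr2 //.
Qed.

Lemma svd_Dnorm : normF (X^T *m X - 1%:M) ^+ 2 = \sum_i (s 0 i ^+ 2 - 1) ^+ 2.
Proof.
rewrite svd_D normF_rorth // normF_lorth // normF_sq frob_diag.
by apply: eq_bigr => i _; rewrite mxE.
Qed.

Lemma svd_XY : normF (X - U *m V^T) ^+ 2 = \sum_i (s 0 i - 1) ^+ 2.
Proof.
have -> : X - U *m V^T = U *m diag_mx (\row_j (s 0 j - 1)) *m V^T.
  have -> : U *m V^T = U *m 1%:M *m V^T by rewrite mulmx1.
  rewrite hX -mulmxBl -mulmxBr diag_one diagB.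
  by congr (_ *m _ *m _); congr diag_mx; apply/matrixP => i j; rewrite !mxE (ord1 i).
rewrite (normF_svd _ hU hV); apply: eq_bigr => i _; by rewrite mxE.
Qed.

Definition wvec : 'rV[R]_p := \row_j (s 0 j * (s 0 j ^+ 2 - 1)).
Definition Wmx : 'M[R]_p := V *m diag_mx wvec *m V^T.

Lemma svd_XD : X *m (X^T *m X - 1%:M) = U *m V^T *m Wmx.
Proof.
rewrite svd_D hX /Wmx -!mulmxA (mulmxA V^T) hV mul1mx (mulmxA (diag_mx s)) mulmx_diag.
rewrite (mulmxA V^T) hV mul1mx.
by congr (_ *m (_ *m _)); congr diag_mx; apply/matrixP => i j; rewrite !mxE.
Qed.

Lemma Wmx_sym : Wmx^T = Wmx.
Proof. by rewrite /Wmx !trmx_mul trmxK tr_diag_mx mulmxA. Qed.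

Lemma svd_XDnorm : normF (X *m (X^T *m X - 1%:M)) ^+ 2 = \sum_i (s 0 i * (s 0 i ^+ 2 - 1)) ^+ 2.
Proof.
rewrite svd_XD /Wmx -!mulmxA (mulmxA V^T) hV mul1mx mulmxA normF_svd //.
by apply: eq_bigr => i _; rewrite mxE.
Qed.

End SVD.
End Mx.


Section Orth.
Variable R : realType.

Lemma symm_part_tr k (M : 'M[R]_k) : (symm_part M)^T = symm_part M.
Proof. by rewrite /symm_part linearZ /= linearD /= trmxK addrC. Qed.

Lemma rgrad_orth n p (Y G : 'M[R]_(n, p)) (W : 'M[R]_p) :
  Y^T *m Y = 1%:M -> W^T = W ->
  frob_inner (G - Y *m symm_part (Y^T *m G)) (Y *m W) = 0.
Proof.
move=> hY hW; rewrite frobE linearB /= trmx_mul symm_part_tr mulmxBl raddfB /=.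
rewrite -!mulmxA (mulmxA Y^T) hY mul1mx /symm_part -scalemxAl mxtraceZ mulmxDl mxtraceD.
have e1 : \tr (Y^T *m G *m W) = \tr (G^T *m (Y *m W)).
  rewrite -mxtrace_tr !trmx_mul trmxK hW mxtrace_mulC mulmxA //.
have e2 : \tr ((Y^T *m G)^T *m W) = \tr (G^T *m (Y *m W)).
  by rewrite trmx_mul trmxK mulmxA.
rewrite e1 e2; set a := \tr _; lra.
Qed.

End Orth.


Section Lin.
Variable R : realType.

Lemma lin0 (a Q : R) (r : R -> R) :
  (forall t, 0 < t <= 1 -> `|r t| <= Q) ->
  (forall eps, 0 < eps -> exists2 delta, 0 < delta &
     forall t, 0 < t < delta -> `|a * t + t ^+ 2 * r t| <= eps * t) -> a = 0.
Proof.
move=> hr h; apply/eqP; rewrite -normr_eq0; apply: contraT => ha.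
have pa : 0 < `|a| by rewrite lt_def ha normr_ge0.
have ha2 : 0 < `|a| / 2 by rewrite divr_gt0.
have [d dp hd] := h (`|a| / 2) ha2.
have hQ1 : 0 < `|Q| + 1 by rewrite ltr_wpDl.
set t := Num.min (Num.min (d / 2) 1) (`|a| / (4 * (`|Q| + 1))).
have t0 : 0 < t.
  rewrite /t !lt_min; apply/andP; split; [apply/andP; split|].
  - exact: divr_gt0.
  - exact: ltr01.
  - by apply: divr_gt0 => //; apply: mulr_gt0.
have td : t <= d / 2 by rewrite /t !ge_min lexx.
have t1 : t <= 1 by rewrite /t !ge_min lexx orbT.
have ta : t <= `|a| / (4 * (`|Q| + 1)) by rewrite /t ge_min lexx orbT.
have tdd : 0 < t < d by rewrite t0 /=; apply: le_lt_trans td _; lra.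
have h1 := hd t tdd.
have t01 : 0 < t <= 1 by rewrite t0 t1.
have h2 := hr t t01.
have h3 : t * (`|Q| + 1) <= `|a| / 4.
  by move: ta; rewrite ler_pdivlMr ?mulr_gt0 // => ta; rewrite ler_pdivlMr //; lra.
have h4 : `|a * t| <= `|a * t + t ^+ 2 * r t| + `|t ^+ 2 * r t|.
  by rewrite -[X in `|X| <= _](addrK (t ^+ 2 * r t)) ler_normB.
rewrite !normrM ?normrX !(ger0_norm (ltW t0)) in h4.
have hQ : Q <= `|Q| := ler_norm Q.
have hr0 : 0 <= `|r t| := normr_ge0 _.
nra.
Qed.

End Lin.


Section Chain.
Variable R : realType.
Variables (n p : nat).
Implicit Types (Y E : 'M[R]_(n, p)).

Lemma trD a b (A B : 'M[R]_(a, b)) : (A + B)^T = A^T + B^T.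
Proof. by apply/matrixP => i j; rewrite !mxE. Qed.
Lemma trZ a b c (A : 'M[R]_(a, b)) : (c *: A)^T = c *: A^T.
Proof. by apply/matrixP => i j; rewrite !mxE. Qed.

Lemma ZtZ Y E t : (Y + t *: E)^T *m (Y + t *: E) =
  Y^T *m Y + t *: (Y^T *m E + E^T *m Y) + t ^+ 2 *: (E^T *m E).
Proof.
rewrite trD trZ mulmxDl !mulmxDr -!scalemxAl -!scalemxAr.
apply/matrixP => i j; rewrite !mxE; ring.
Qed.


Definition P1m Y E := Y^T *m E + E^T *m Y.
Definition K1 Y E := E - 2^-1 *: (Y *m P1m Y E).
Definition K2 Y E := - 2^-1 *: (E *m P1m Y E + Y *m (E^T *m E)).
Definition K3 Y E := - 2^-1 *: (E *m (E^T *m E)).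

Lemma phi_expand Y E t : Y^T *m Y = 1%:M ->
  (Y + t *: E) *m Amap (Y + t *: E) = Y + t *: K1 Y E + t ^+ 2 *: K2 Y E + t ^+ 3 *: K3 Y E.
Proof.
move=> hY; rewrite /Amap ZtZ hY /K1 /K2 /K3 /P1m.
do 3 (rewrite ?(mulmxDr, mulmxDl, mulmxN, mulNmx, mulmx1, mul1mx); rewrite -?scalemxAl -?scalemxAr).
apply/matrixP => i j; by rewrite !mxE; field.
Qed.

Lemma K1_adj Y E G : frob_inner G (K1 Y E) = frob_inner (G - Y *m symm_part (Y^T *m G)) E.
Proof.
rewrite /K1 /P1m /symm_part frobBr frobZr frobBl !frobE.
rewrite trmx_mul trZ trD ?trmx_mul ?trmxK -?scalemxAl mxtraceZ.
rewrite ?(mulmxDr, mulmxDl, mxtraceD) -!mulmxA.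
have e : \tr (Y^T *m (G *m (Y^T *m E))) = \tr (G^T *m (Y *m (E^T *m Y))).
  rewrite -mxtrace_tr !trmx_mul !trmxK -mulmxA mxtrace_mulC -!mulmxA //.
rewrite e; set a := \tr _; set b := \tr _; set c := \tr _; lra.
Qed.

Lemma min3 (x y z : R) : 0 < x -> 0 < y -> 0 < z ->
  exists2 d, 0 < d & [/\ d <= x, d <= y & d <= z].
Proof.
move=> hx hy hz; exists (Num.min x (Num.min y z)).
  by rewrite !lt_min hx hy hz.
by split; rewrite !ge_min ?lexx ?orbT.
Qed.

Lemma normK_bound (A B C : 'M[R]_(n, p)) (t : R) : 0 < t <= 1 ->
  normF (t *: A + t ^+ 2 *: B + t ^+ 3 *: C) <= t * (normF A + normF B + normF C).
Proof.
case/andP => t0 t1.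
apply: le_trans (normFD _ _) _; rewrite normFZ.
apply: le_trans (lerD (normFD _ _) (lexx _)) _; rewrite !normFZ.
rewrite (ger0_norm (ltW t0)) !(ger0_norm (exprn_ge0 _ (ltW t0))).
have := normF_ge0 A; have := normF_ge0 B; have := normF_ge0 C.
have t2 : t ^+ 2 <= t by rewrite expr2 ger_pMr.
have t3 : t ^+ 3 <= t by rewrite exprS ger_pMr // (le_trans t2).
nra.
Qed.

Lemma frob_expand (G A B C : 'M[R]_(n, p)) (t : R) :
  frob_inner G (t *: A + t ^+ 2 *: B + t ^+ 3 *: C) =
  t * frob_inner G A + t ^+ 2 * frob_inner G B + t ^+ 3 * frob_inner G C.
Proof. by rewrite !frobDr !frobZr. Qed.

Lemma gg_stiefel (f : 'M[R]_(n, p) -> R) gf gg Y :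
  Y^T *m Y = 1%:M -> is_gradient f gf -> is_gradient (gfun f) gg ->
  gg Y = rgrad gf Y.
Proof.
move=> hY hf hg.
set E := gg Y - rgrad gf Y.
set G := gf Y.
set C := normF (K1 Y E) + normF (K2 Y E) + normF (K3 Y E).
have C0 : 0 <= C by rewrite !addr_ge0 ?normF_ge0.
have E0 : 0 <= normF E := normF_ge0 E.
have hY0 : Y *m Amap Y = Y.
  by rewrite /Amap hY mulmxBr -!scalemxAr !mulmx1; apply/matrixP => i j; rewrite !mxE; field.
suff : frob_inner E E = 0 by move/frob_eq0/eqP; rewrite subr_eq0 => /eqP.
have -> : frob_inner E E = frob_inner (gg Y) E - frob_inner (rgrad gf Y) E by rewrite frobBl.
apply: (@lin0 _ _ (`|frob_inner G (K2 Y E)| + `|frob_inner G (K3 Y E)|)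
          (fun t => - (frob_inner G (K2 Y E) + t * frob_inner G (K3 Y E)))).
  move=> t /andP [t0 t1]; rewrite normrN.
  apply: le_trans (ler_normD _ _) _; rewrite normrM (ger0_norm (ltW t0)). rewrite lerD2l.
  by rewrite -[X in _ <= X]mul1r ler_wpM2r.
move=> eps eps0.
have e10 : 0 < eps / (C + normF E + 1) by rewrite divr_gt0 // ltr_wpDl // addr_ge0.
have [d1 d10 hd1] := hf Y _ e10.
have [d2 d20 hd2] := hg Y _ e10.
have dd1 : 0 < d1 / (C + 1) by rewrite divr_gt0 // ltr_wpDl.
have dd2 : 0 < d2 / (normF E + 1) by rewrite divr_gt0 // ltr_wpDl.
have [d d0 [dle1 dle2 dle3]] := min3 ltr01 dd1 dd2.
exists d => // t /andP [t0 td].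
have t1 : t <= 1 by apply: ltW; apply: lt_le_trans dle1.
set K := t *: K1 Y E + t ^+ 2 *: K2 Y E + t ^+ 3 *: K3 Y E.
have hK : normF K <= t * C by apply: normK_bound; rewrite t0 t1.
have hKd : normF K < d1.
  apply: le_lt_trans hK _.
  have : t < d1 / (C + 1) by apply: lt_le_trans dle2.
  rewrite ltr_pdivlMr ?ltr_wpDl //; nra.
have htE : normF (t *: E) = t * normF E by rewrite normFZ ger0_norm ?ltW.
have htEd : normF (t *: E) < d2.
  rewrite htE; have : t < d2 / (normF E + 1) by apply: lt_le_trans dle3.
  rewrite ltr_pdivlMr ?ltr_wpDl //; nra.
have h1 := hd1 K hKd.
have h2 := hd2 (t *: E) htEd.
rewrite /gfun phi_expand // hY0 htE in h2.
have eYK : Y + t *: K1 Y E + t ^+ 2 *: K2 Y E + t ^+ 3 *: K3 Y E = Y + K by rewrite /K !addrA.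
rewrite eYK in h2.
have eK : frob_inner G K = t * frob_inner (rgrad gf Y) E + t ^+ 2 * frob_inner G (K2 Y E)
           + t ^+ 3 * frob_inner G (K3 Y E).
  by rewrite /K frob_expand K1_adj.
have eq : (frob_inner (gg Y) E - frob_inner (rgrad gf Y) E) * t +
    t ^+ 2 * - (frob_inner G (K2 Y E) + t * frob_inner G (K3 Y E)) =
    (f (Y + K) - f Y - frob_inner G K) - (f (Y + K) - f Y - frob_inner (gg Y) (t *: E)).
  rewrite eK (frobZr t E (gg Y)); ring.
rewrite eq; apply: le_trans (ler_normB _ _) _.
have h1' : `|f (Y + K) - f Y - frob_inner G K| <= eps / (C + normF E + 1) * (t * C).
  by apply: le_trans h1 _; rewrite ler_wpM2l // ltW.
have hfin : eps / (C + normF E + 1) * (t * C) + eps / (C + normF E + 1) * (t * normF E) <= eps * t.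
  have hc : 0 < C + normF E + 1 by rewrite ltr_wpDl // addr_ge0.
  have he : eps / (C + normF E + 1) * (C + normF E + 1) = eps by rewrite divfK // gt_eqF.
  move: e10 he; set e1 := eps / _ => e10 he; nra.
apply: le_trans hfin; exact: lerD h1' h2.
Qed.

End Chain.


Section Pen.
Variable R : realType.
Variables (n p : nat).

Lemma quad_expand k l (A B C : 'M[R]_(k, l)) (t : R) :
  frob_inner (A + t *: B + t ^+ 2 *: C) (A + t *: B + t ^+ 2 *: C) =
  frob_inner A A + t * (2 * frob_inner A B) +
  t ^+ 2 * ((frob_inner B B + 2 * frob_inner A C) + t * (2 * frob_inner B C) + t ^+ 2 * frob_inner C C).
Proof.
rewrite !frobDl !frobDr !frobZl !frobZr (frobC B A) (frobC C A) (frobC C B); ring.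
Qed.

Lemma DP1 (X E : 'M[R]_(n, p)) :
  frob_inner (X^T *m X - 1%:M) (X^T *m E + E^T *m X) = 2 * frob_inner (X *m (X^T *m X - 1%:M)) E.
Proof.
set D := X^T *m X - 1%:M.
have hD : D^T = D by rewrite /D trD trmx_mul trmxK -scaleN1r trZ tr_scalar_mx.
rewrite !frobE hD mulmxDr mxtraceD trmx_mul hD.
have e : \tr (D *m (E^T *m X)) = \tr (D *m X^T *m E).
  rewrite -mxtrace_tr !trmx_mul !trmxK hD mxtrace_mulC !mulmxA //.
rewrite e mulmxA; ring.
Qed.

Lemma gh_form (f : 'M[R]_(n, p) -> R) gg gh beta X :
  is_gradient (gfun f) gg -> is_gradient (hfun f beta) gh ->
  gh X = gg X + beta *: (X *m (X^T *m X - 1%:M)).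
Proof.
move=> hg hh.
set B := beta *: (X *m (X^T *m X - 1%:M)).
set E := gh X - (gg X + B).
set D := X^T *m X - 1%:M.
set P1 := X^T *m E + E^T *m X.
set P2 := E^T *m E.
set c2 := frob_inner P1 P1 + 2 * frob_inner D P2.
set c3 := 2 * frob_inner P1 P2.
set c4 := frob_inner P2 P2.
have E0 : 0 <= normF E := normF_ge0 E.
suff : frob_inner E E = 0 by move/frob_eq0/eqP; rewrite subr_eq0 => /eqP.
have -> : frob_inner E E = frob_inner (gh X) E - frob_inner (gg X) E - frob_inner B E.
  by rewrite /E !frobBl frobDl; ring.
apply: (@lin0 _ _ (`|beta| / 4 * (`|c2| + `|c3| + `|c4|))
          (fun t => - (beta / 4 * (c2 + t * c3 + t ^+ 2 * c4)))).
  move=> t /andP [t0 t1]; rewrite normrN normrM.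
  have -> : `|beta / 4| = `|beta| / 4 by rewrite normrM (ger0_norm (_ : 0 <= 4^-1)) // invr_ge0.
  rewrite ler_wpM2l ?divr_ge0 //.
  apply: le_trans (ler_normD _ _) _; apply: lerD.
    apply: le_trans (ler_normD _ _) _; apply: lerD => //.
    by rewrite normrM (ger0_norm (ltW t0)) -[X in _ <= X]mul1r ler_wpM2r.
  rewrite normrM (ger0_norm (exprn_ge0 _ (ltW t0))) -[X in _ <= X]mul1r ler_wpM2r //.
  by rewrite expr2; apply: mulr_ile1 => //; apply: ltW.
move=> eps eps0.
have e10 : 0 < eps / (2 * normF E + 1) by rewrite divr_gt0 // ltr_wpDl // mulr_ge0.
have [d1 d10 hd1] := hh X _ e10.
have [d2 d20 hd2] := hg X _ e10.
have dd1 : 0 < d1 / (normF E + 1) by rewrite divr_gt0 // ltr_wpDl.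
have dd2 : 0 < d2 / (normF E + 1) by rewrite divr_gt0 // ltr_wpDl.
have [d d0 [dle1 dle2 dle3]] := min3 ltr01 dd1 dd2.
exists d => // t /andP [t0 td].
have htE : normF (t *: E) = t * normF E by rewrite normFZ ger0_norm ?ltW.
have htEd1 : normF (t *: E) < d1.
  rewrite htE; have : t < d1 / (normF E + 1) by apply: lt_le_trans dle2.
  rewrite ltr_pdivlMr ?ltr_wpDl //; nra.
have htEd2 : normF (t *: E) < d2.
  rewrite htE; have : t < d2 / (normF E + 1) by apply: lt_le_trans dle3.
  rewrite ltr_pdivlMr ?ltr_wpDl //; nra.
have h1 := hd1 (t *: E) htEd1.
have h2 := hd2 (t *: E) htEd2.
rewrite htE in h1 h2.
have eD : (X + t *: E)^T *m (X + t *: E) - 1%:M = D + t *: P1 + t ^+ 2 *: P2.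
  by rewrite ZtZ /D /P1 /P2; apply/matrixP => i j; rewrite !mxE; ring.
have eq : (frob_inner (gh X) E - frob_inner (gg X) E - frob_inner B E) * t +
    t ^+ 2 * - (beta / 4 * (c2 + t * c3 + t ^+ 2 * c4)) =
    - (hfun f beta (X + t *: E) - hfun f beta X - frob_inner (gh X) (t *: E)) +
    (gfun f (X + t *: E) - gfun f X - frob_inner (gg X) (t *: E)).
  rewrite /hfun !normF_sq eD quad_expand -/D DP1 !frobZr /B frobZl /c2 /c3 /c4.
  by field.
rewrite eq; apply: le_trans (ler_normD _ _) _; rewrite normrN.
have hc : 0 < 2 * normF E + 1 by rewrite ltr_wpDl // mulr_ge0.
have he : eps / (2 * normF E + 1) * (2 * normF E + 1) = eps by rewrite divfK // gt_eqF.
move: e10 he h1 h2; set e1 := eps / _ => e10 he h1 h2.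
have := normF_ge0 E; nra.
Qed.

End Pen.


Section Fin.
Variable R : realType.

Lemma sum_term p (F : 'I_p -> R) i : (forall j, 0 <= F j) -> F i <= \sum_j F j.
Proof.
by move=> h; rewrite (bigD1 i) //= lerDl sumr_ge0.
Qed.

Lemma frob_diag_mul p k (d : 'rV[R]_p) (A : 'M[R]_(p, k)) (c : R) :
  (forall i, d 0 i ^+ 2 <= c) ->
  frob_inner (diag_mx d *m A) (diag_mx d *m A) <= c * frob_inner A A.
Proof.
move=> h; rewrite /frob_inner mulr_sumr; apply: ler_sum => i _.
rewrite mulr_sumr; apply: ler_sum => j _; rewrite mul_diag_mx !mxE.
have := h i; have := sqr_ge0 (A i j); nra.
Qed.

Lemma omega_mem n p (X U : 'M[R]_(n, p)) (s : 'rV[R]_p) (V : 'M[R]_p) :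
  is_econ_svd X U s V -> (forall i, s 0 i ^+ 2 <= 7/6) -> Omega n p X.
Proof.
case=> hU hV hV' hpos hX hs.
rewrite /Omega /spec_norm /=; apply: ge_ereal_sup => _ [v /= hv <-]; rewrite /vnorm in hv.
rewrite lee_fin /vnorm hX -!mulmxA normF_lorth //.
apply: le_sq; first lra.
rewrite normF_sq; apply: le_trans (frob_diag_mul _ hs) _.
rewrite -normF_sq normF_lorth ?trmxK // hv expr1n; lra.
Qed.

Lemma omega_mem_orth n p (U : 'M[R]_(n, p)) (V : 'M[R]_p) :
  U^T *m U = 1%:M -> V *m V^T = 1%:M -> Omega n p (U *m V^T).
Proof.
move=> hU hV'.
rewrite /Omega /spec_norm /=; apply: ge_ereal_sup => _ [v /= hv <-]; rewrite /vnorm in hv.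
rewrite lee_fin /vnorm -!mulmxA normF_lorth // normF_lorth ?trmxK // hv; lra.
Qed.

End Fin.


Unset Implicit Arguments. Set Strict Implicit. Set Printing Implicit Defensive.

Lemma pyth (R : realType) m k (A B : 'M[R]_(m, k)) :
  frob_inner A B = 0 -> normF (A + B) ^+ 2 = normF A ^+ 2 + normF B ^+ 2.
Proof. by move=> h; rewrite !normF_sq frobDl !frobDr h (frobC B A) h addr0 add0r. Qed.

Theorem mainTheorem17 (R : realType) (n p : nat) (hnp : (p <= n)%N)
  (f : 'M[R]_(n, p) -> R) (gf : 'M[R]_(n, p) -> 'M[R]_(n, p))
  (gg gh : 'M[R]_(n, p) -> 'M[R]_(n, p)) (beta : R) :
  is_gradient f gf -> loc_lipschitz f -> loc_lipschitz_mx gf ->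
  is_gradient (gfun f) gg ->
  is_gradient (hfun f beta) gh ->
  (betabar n p gf gg <= beta%:E)%E ->
  forall X : 'M[R]_(n, p), OmegaBar n p (1/6) X ->
  forall (U : 'M[R]_(n, p)) (s : 'rV[R]_p) (V : 'M[R]_p), is_econ_svd X U s V ->
  normF (gh X) >= 1/2 * normF (rgrad gf (U *m V^T)) + beta / 4 * normF (X^T *m X - 1%:M).
Proof.
move=> hf _ _ hg hh hb X hX U s V hsvd.
have [hU hV hV' hpos hXe] := hsvd.
set Y := U *m V^T.
have hY : Y^T *m Y = 1%:M.
  by rewrite /Y trmx_mul trmxK -mulmxA (mulmxA U^T) hU mul1mx.
have ggY := gg_stiefel hY hf hg.
have ghX := gh_form X hg hh.
set D := X^T *m X - 1%:M.
have hD : normF D <= 1/6 := hX.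
have D0 : 0 <= normF D := normF_ge0 D.
have si : forall i, (s 0 i ^+ 2 - 1) ^+ 2 <= normF D ^+ 2.
  move=> i; rewrite /D (svd_Dnorm hsvd); apply: (@sum_term _ p (fun j => (s 0 j ^+ 2 - 1) ^+ 2) i).
  by move=> j; apply: sqr_ge0.
have si2 : forall i, 5/6 <= s 0 i ^+ 2 <= 7/6.
  move=> i; have := si i; set u := s 0 i ^+ 2 => h.
  have h2 : normF D ^+ 2 <= 1/36 by nra.
  apply/andP; split; nra.
have XO : Omega n p X by apply: (omega_mem hsvd) => i; case/andP: (si2 i).
have YO : Omega n p Y by apply: omega_mem_orth.
move: hb; rewrite /betabar ge_max => /andP [hb1 hb2].
have beta0 : 0 <= beta.
  have h0 : (0 <= M1 n p gf)%E.
    have hm : ((normF (Gmap gf X))%:E <= M1 n p gf)%E by apply: ereal_sup_ubound; exists X.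
    by apply: le_trans hm; rewrite lee_fin normF_ge0.
  have : (0 <= 12%:E * M1 n p gf)%E by apply: mule_ge0.
  by move=> h; have := le_trans h hb1; rewrite lee_fin.
have hlip : normF (gg X - gg Y) <= beta / 6 * normF (X - Y).
  have [eXY|nXY] := eqVneq X Y.
    by rewrite eXY !subrr normF0 mulr0.
  have hr : ((normF (gg X - gg Y) / normF (X - Y))%:E <= M2 n p gg)%E.
    apply: ereal_sup_ubound; exists X, Y; split => //; exact/eqP.
  have : (6%:E * (normF (gg X - gg Y) / normF (X - Y))%:E <= beta%:E)%E.
    by apply: le_trans hb2; apply: lee_wpmul2l.
  rewrite -EFinM lee_fin => h.
  have nz : 0 < normF (X - Y).
    rewrite lt_def normF_ge0 andbT; apply/eqP => /normF_eq0/eqP.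
    by rewrite subr_eq0 (negbTE nXY).
  have h' : normF (gg X - gg Y) / normF (X - Y) <= beta / 6 by lra.
  by rewrite ler_pdivrMr // in h'.
have hXY : normF (X - Y) <= normF D.
  apply: le_sq => //; rewrite (svd_XY hsvd) /D (svd_Dnorm hsvd).
  apply: ler_sum => i _; have := hpos i; set u := s 0 i => hu.
  have hq : 0 <= u ^+ 2 + 2 * u by rewrite addr_ge0 ?sqr_ge0 // mulr_ge0 // ltW.
  have := mulr_ge0 (sqr_ge0 (u - 1)) hq; nra.
have hXD : 5/6 * normF D ^+ 2 <= normF (X *m D) ^+ 2.
  rewrite /D (svd_XDnorm hsvd) (svd_Dnorm hsvd) mulr_sumr.
  apply: ler_sum => i _; case/andP: (si2 i); set u := s 0 i => h1 h2.
  rewrite exprMn; have := sqr_ge0 (u ^+ 2 - 1); nra.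
set b := beta *: (X *m D).
set g := rgrad gf Y.
have orth : frob_inner g b = 0.
  by rewrite /b frobZr /D (svd_XD hsvd) rgrad_orth ?mulr0 // Wmx_sym.
have hgb : normF (g + b) ^+ 2 = normF g ^+ 2 + beta ^+ 2 * normF (X *m D) ^+ 2.
  by rewrite (@pyth _ _ _ _ _ orth) /b normFZ (ger0_norm beta0) exprMn.
have eghX : gh X = (g + b) + (gg X - gg Y) by rewrite ghX ggY /g /b; apply/matrixP => i j; rewrite !mxE; ring.
have hlow : normF (g + b) - normF (gg X - gg Y) <= normF (gh X).
  have := normFD (gh X) (- (gg X - gg Y)).
  rewrite normFN eghX addrK; lra.
have hc : 1/2 * normF g + 5/12 * (beta * normF D) <= normF (g + b).
  apply: le_sq; first exact: normF_ge0.
  rewrite hgb.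
  have h5 : 5/6 * (beta * normF D) ^+ 2 <= beta ^+ 2 * normF (X *m D) ^+ 2.
    have h := ler_wpM2l (sqr_ge0 beta) hXD; apply: le_trans h; rewrite exprMn mulrCA lexx //.
  move: h5; rewrite (_ : beta ^+ 2 * normF (X *m D) ^+ 2 = (beta * normF (X *m D)) ^+ 2); last by rewrite exprMn.
  move: (normF g) (beta * normF D) (beta * normF (X *m D)) => a t y h5.
  have := sqr_ge0 (a - 5/18 * t); have := sqr_ge0 t; nra.
have := normF_ge0 (gg X - gg Y); have := normF_ge0 (X - Y).
have := mulr_ge0 beta0 D0; nra.
Qed.
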